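(* Let $n\in\{2,6,10,\dots\}$ and consider $f_{n+4}$ on $\{0,1\}^{n+4}$. (a) If $x_{n+2}=x_{n+3}=x_{n+4}=0$, then changing $x_{n+1}$ from $0$ to $1$ strictly increases $f_{n+4}$ if and only if $x_i=1$ for all $i\le n$. (b) If $x_{n+4}=0$, then changing $x_{n+3}$ from $0$ to $1$ strictly increases $f_{n+4}$ if and only if $x_{n+1}=x_{n+2}=1$ and $x_i=0$ for all $i\le n$. (c) Changing $x_{n+4}$ from $0$ to $1$ strictly increases $f_{n+4}$ if and only if $x_{n+3}=1$.
   Context: For $n\in\{2,6,10,\dots\}$ define polynomials $f_n$ in variables $x_1,\dots,x_n$ (evaluated on $\{0,1\}^n$) recursively. Set $f_2(x_1,x_2):=x_1+x_2$. For $n\in\{2,6,10,\dots\}$, write $\mathbf{x}=(x_1,\dots,x_n)$, $S:=\sum_{i=1}^n x_i$, let $M_n:=\max_{\{0,1\}^n} f_n-\min_{\{0,1\}^n} f_n+1$, and define $f_{n+4}(\mathbf{x},x_{n+1},x_{n+2},x_{n+3},x_{n+4}) := f_n(\mathbf{x}) - M_n n^2 x_{n+1} + M_n(n+1) S x_{n+1} - x_{n+2} - 2M_n n S x_{n+2} + 2M_n n(n+2) x_{n+1}x_{n+2} - 4 S x_{n+3} + 2x_{n+1}x_{n+3} + 2x_{n+2}x_{n+3} - 3x_{n+3} + (M_n(n-1)+4) S x_{n+4} + 6M_n n^2 x_{n+3}x_{n+4} - 5M_n n^2 x_{n+4}$. *)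

(* Defs.v *)
From HB Require Import structures.
From mathcomp Require Import all_boot all_order all_algebra.
Set Implicit Arguments. Unset Strict Implicit. Unset Printing Implicit Defensive.
Import Order.TTheory GRing.Theory Num.Theory.
Local Open Scope ring_scope.

(* Assignments x in {0,1}^n are encoded as x : nat -> bool with 1-based
   indices: x i is the value of the variable x_i (only x_1..x_n matter). *)

Definition X (x : nat -> bool) (i : nat) : int := (nat_of_bool (x i))%:Z.

Definition ext (n : nat) (v : {ffun 'I_n -> bool}) : nat -> bool :=
  fun i => if i is j.+1 then odflt false (omap v (insub j)) else false.

Definition allfalse : nat -> bool := fun _ => false.

Definition fmax (n : nat) (f : (nat -> bool) -> int) : int :=
  \big[Num.max/f allfalse]_(v : {ffun 'I_n -> bool}) f (ext v).
Definition fmin (n : nat) (f : (nat -> bool) -> int) : int :=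
  \big[Num.min/f allfalse]_(v : {ffun 'I_n -> bool}) f (ext v).

Definition Mof (n : nat) (f : (nat -> bool) -> int) : int :=
  fmax n f - fmin n f + 1.

(* F k = f_{4k+2} *)
Fixpoint F (k : nat) : (nat -> bool) -> int :=
  match k with
  | 0 => fun x => X x 1 + X x 2
  | k'.+1 =>
    let n := (4 * k' + 2)%N in
    let f := F k' in
    let M := Mof n f in
    let nz : int := n%:Z in
    fun x =>
      let S := \sum_(1 <= i < n.+1) X x i in
      let x1 := X x (n + 1) in let x2 := X x (n + 2) in
      let x3 := X x (n + 3) in let x4 := X x (n + 4) in
      f x - M * nz ^+ 2 * x1 + M * (nz + 1) * S * x1 - x2
        - 2 * M * nz * S * x2 + 2 * M * nz * (nz + 2) * x1 * x2
        - 4 * S * x3 + 2 * x1 * x3 + 2 * x2 * x3 - 3 * x3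
        + (M * (nz - 1) + 4) * S * x4 + 6 * M * nz ^+ 2 * x3 * x4
        - 5 * M * nz ^+ 2 * x4
  end.

(* f_n for n in {2,6,10,...} *)
Definition f (n : nat) : (nat -> bool) -> int := F (n %/ 4).

Definition upd (x : nat -> bool) (i : nat) (b : bool) : nat -> bool :=
  fun j => if j == i then b else x j.

(* Main.v *)
Require Import Defs.
From mathcomp Require Import all_boot all_order all_algebra.
From mathcomp Require Import zify ring lra.
Import Order.TTheory GRing.Theory Num.Theory.
Local Open Scope ring_scope.

Lemma F_dep k x y : (forall i, (i <= 4 * k + 2)%N -> x i = y i) -> F k x = F k y.
Proof.
elim: k x y => [|k IH] x y H /=.
  by rewrite /X !H.
have -> : F k x = F k y by apply: IH => i Hi; apply: H; lia.
have -> : \sum_(1 <= i < (4 * k + 2).+1) X x i = \sum_(1 <= i < (4 * k + 2).+1) X y i.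
  apply: eq_big_nat => i /andP [_ Hi]; rewrite /X H //; lia.
by rewrite /X !H //; lia.
Qed.

Lemma fmin_le n g : fmin n g <= g allfalse.
Proof.
rewrite /fmin; apply: (big_rec (fun y => y <= g allfalse)) => // i y _ Hy.
by rewrite ge_min Hy orbT.
Qed.

Lemma fmax_ge n g : g allfalse <= fmax n g.
Proof.
rewrite /fmax; apply: (big_rec (fun y => g allfalse <= y)) => // i y _ Hy.
by rewrite le_max Hy orbT.
Qed.

Lemma Mof_pos n g : 0 < Mof n g.
Proof. rewrite /Mof; have := fmin_le n g; have := fmax_ge n g; lia. Qed.

Definition s n (x : nat -> bool) := (\sum_(1 <= i < n.+1) nat_of_bool (x i))%N.

Lemma s_S n x : s n.+1 x = (s n x + x n.+1)%N.
Proof. by rewrite /s big_nat_recr. Qed.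

Lemma s_le n x : (s n x <= n)%N.
Proof. elim: n => [|n IH]; first by rewrite /s big_geq. rewrite s_S; case: (x n.+1) => /=; lia. Qed.

Lemma s_full n x : s n x = n <-> (forall i, (1 <= i <= n)%N -> x i = true).
Proof.
elim: n => [|n IH]; first by split => [_ i|_]; [lia|rewrite /s big_geq].
rewrite s_S; split.
  have := s_le n x; case E: (x n.+1) => /= H1 H2.
  - move=> i /andP [H3 H4]; case: (ltngtP i n.+1) => Hi; [|lia|by rewrite Hi].
    by apply IH; [lia|lia].
  - lia.
move=> H; rewrite H /=; last by lia.
by rewrite (proj2 IH) //; [lia| move=> i Hi; apply H; lia].
Qed.

Lemma s_zero n x : s n x = 0%N <-> (forall i, (1 <= i <= n)%N -> x i = false).
Proof.
elim: n => [|n IH]; first by split => [_ i|_]; [lia|rewrite /s big_geq].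
rewrite s_S; split.
  case E: (x n.+1) => /= H2; first lia.
  move=> i /andP [H3 H4]; case: (ltngtP i n.+1) => Hi; [|lia|by rewrite Hi].
  by apply IH; [lia|lia].
move=> H; rewrite H /=; last by lia.
by rewrite (proj2 IH) //; move=> i Hi; apply H; lia.
Qed.

Lemma S_eq n x : \sum_(1 <= i < n.+1) X x i = (s n x)%:Z.
Proof. rewrite /s /X; apply: (big_rec2 (fun a b => a = Posz b)) => // i a b _ ->; by rewrite PoszD. Qed.

Lemma S_upd n x j b : (n < j)%N ->
  \sum_(1 <= i < n.+1) X (upd x j b) i = \sum_(1 <= i < n.+1) X x i.
Proof.
move=> Hj; apply: eq_big_nat => i /andP [_ Hi]; rewrite /X /upd.
by have -> : (i == j) = false by apply/eqP; lia.
Qed.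

Lemma Fupd k x j b : (4 * k + 2 < j)%N -> F k (upd x j b) = F k x.
Proof. move=> Hj; apply: F_dep => i Hi; rewrite /upd; have -> : (i == j) = false by apply/eqP; lia. by []. Qed.
Lemma keyA (M N S c : int) : 0 < M -> 2 <= N -> 0 <= S <= N ->
  (c < c - M * N ^+ 2 + M * (N + 1) * S <-> S = N).
Proof.
move=> HM HN /andP [H0 H1]; split => [H|->]; last by nia.
have [//|Hlt] := eqVneq S N.
have H2 : S <= N - 1 by lia.
have : M * (N + 1) * S <= M * (N + 1) * (N - 1).
  by apply: ler_wpM2l; [nia|].
nia.
Qed.
Lemma keyC (M N S : int) : 0 < M -> 2 <= N -> 0 <= S <= N ->
  0 <= M * N * S - M * S /\ 0 < M * N ^+ 2 /\
  M * N * S - M * S + 4 * S <= 5 * M * N ^+ 2.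
Proof.
move=> HM HN /andP [H0 H1].
have A : 0 <= M * (N - 1) * S by apply: mulr_ge0; [apply: mulr_ge0|]; lia.
have B : 0 < M * N ^+ 2 by apply: mulr_gt0; [|apply: exprn_gt0]; lia.
have C : M * (N - 1) * S <= M * (N - 1) * N by apply: ler_wpM2l; [apply: mulr_ge0|]; lia.
have D : N <= M * N ^+ 2 by nia.
split; first by lia.
split; first by [].
nia.
Qed.

Lemma Fsucc k x : F k.+1 x =
    let n := (4 * k + 2)%N in
    let M := Mof n (F k) in
    let nz : int := n%:Z in
      let S := \sum_(1 <= i < n.+1) X x i in
      let x1 := X x (n + 1) in let x2 := X x (n + 2) in
      let x3 := X x (n + 3) in let x4 := X x (n + 4) in
      F k x - M * nz ^+ 2 * x1 + M * (nz + 1) * S * x1 - x2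
        - 2 * M * nz * S * x2 + 2 * M * nz * (nz + 2) * x1 * x2
        - 4 * S * x3 + 2 * x1 * x3 + 2 * x2 * x3 - 3 * x3
        + (M * (nz - 1) + 4) * S * x4 + 6 * M * nz ^+ 2 * x3 * x4
        - 5 * M * nz ^+ 2 * x4.
Proof. by []. Qed.

Lemma Xupd x j b i : X (upd x j b) i = if i == j then (nat_of_bool b)%:Z else X x i.
Proof. by rewrite /X /upd; case: (i == j). Qed.

Theorem mainTheorem7 (n : nat) (hn : (n %% 4 = 2)%N) :
  (forall x : nat -> bool,
     x (n + 2)%N = false -> x (n + 3)%N = false -> x (n + 4)%N = false ->
     (f (n + 4) (upd x (n + 1) false) < f (n + 4) (upd x (n + 1) true)
      <-> (forall i : nat, (1 <= i <= n)%N -> x i = true))) /\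
  (forall x : nat -> bool,
     x (n + 4)%N = false ->
     (f (n + 4) (upd x (n + 3) false) < f (n + 4) (upd x (n + 3) true)
      <-> x (n + 1)%N = true /\ x (n + 2)%N = true /\
          (forall i : nat, (1 <= i <= n)%N -> x i = false))) /\
  (forall x : nat -> bool,
     (f (n + 4) (upd x (n + 4) false) < f (n + 4) (upd x (n + 4) true)
      <-> x (n + 3)%N = true)).
Proof.
have [k Hk] : exists k, n = (4 * k + 2)%N by exists (n %/ 4)%N; lia.
have Hf : f (n + 4) = F k.+1 by rewrite /f; congr F; lia.
rewrite Hf; subst n.
have HM := Mof_pos (4 * k + 2) (F k).
have HN : (2 <= Posz (4 * k + 2))%R by lia.
split; [|split] => x.
{ move=> h2 h3 h4.
  rewrite !Fsucc /= !Fupd ?S_upd ?S_eq; try lia.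
  rewrite !Xupd !eqn_add2l /= /X h2 h3 h4 /= -s_full.
  have HS : (0 <= Posz (s (4 * k + 2) x) <= Posz (4 * k + 2))%R by have := s_le (4 * k + 2) x; lia.
  have E : (s (4 * k + 2) x = (4*k+2)%N) <-> (Posz (s (4 * k + 2) x) = Posz (4*k+2)) by split => [->|[]].
  rewrite E.
  rewrite ?(mulr0, mulr1, subr0, addr0, mul0r, add0r, sub0r).
  move: (Posz (s _ x)) (Posz (4 * k + 2)) (Mof _ _) (F k x) HM HN HS => S N M c HM HN HS.
  exact: keyA. }
{ move=> h4.
  rewrite !Fsucc /= !Fupd ?S_upd ?S_eq; try lia.
  rewrite !Xupd !eqn_add2l /= /X h4 /= -s_zero.
  have HS : (0 <= Posz (s (4 * k + 2) x) <= Posz (4 * k + 2))%R by have := s_le (4 * k + 2) x; lia.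
  have E : (s (4 * k + 2) x = 0%N) <-> (Posz (s (4 * k + 2) x) = 0) by split => [->|[]].
  rewrite E.
  case: (x _); case: (x _) => /=;
  rewrite ?(mulr0, mulr1, subr0, addr0, mul0r, add0r, sub0r);
  move: (Posz (s _ x)) (Posz (4 * k + 2)) (Mof _ _) (F k x) HM HN HS => S N M c HM HN HS.
  all: split; [move=> H; do ! split => //; lia| by case => //= _ [//= _ ->]; lia]. }
{ rewrite !Fsucc /= !Fupd ?S_upd ?S_eq; try lia.
  rewrite !Xupd !eqn_add2l /= /X /=.
  have HS : (0 <= Posz (s (4 * k + 2) x) <= Posz (4 * k + 2))%R by have := s_le (4 * k + 2) x; lia.
  case: (x _); case: (x _);  case: (x _) => /=;
  rewrite ?(mulr0, mulr1, subr0, addr0, mul0r, add0r, sub0r);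
  move: (Posz (s _ x)) (Posz (4 * k + 2)) (Mof _ _) (F k x) HM HN HS => S N M c HM HN HS.
  all: have := keyC _ _ _ HM HN HS; split => //; lia. }
Qed.
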